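(* Let $G$ and $H$ be finite abelian groups, written additively, of the same even order $k>2$, let $f:G\to H$ be semi-planar, and suppose $S(G,H;f)$ splits into two substructures $S_1$ and $S_2$ with $\mathcal{L}(0,0)\in S_1$. For $i=1,2$ and $a\in G$ let $P_a^i=\{b\in H : \mathcal{L}(a,b)\in S_i\}$. If $a,c\in G$ and $P_a^i\cap P_c^i\neq\varnothing$ for $i=1$ or $i=2$, then $P_{a-c}^1=P_{c-a}^1=P_0^1$.
   Context: A function $f:G\to H$ is semi-planar if for every non-identity $a\in G$ and every $y\in H$, the equation $f(x+a)-f(x)=y$ has either $0$ or $2$ solutions $x\in G$. The incidence structure $S(G,H;f)$ has points $(x,y)\in G\times H$ and lines $\mathcal{L}(a,b)$ for $(a,b)\in G\times H$, with $(x,y)$ incident with $\mathcal{L}(a,b)$ iff $y=f(x-a)+b$. Its incidence graph is the bipartite graph on points and lines with an edge for each incident pair. $S(G,H;f)$ splits into two substructures $S_1,S_2$ if its incidence graph has exactly two connected components; $S_1,S_2$ are the incidence structures formed by the points and lines of the two components, and $\mathcal{L}(a,b)\in S_i$ means the line lies in component $S_i$. *)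

(* Defs.v *)
From HB Require Import structures.
From mathcomp Require Import all_boot all_order all_algebra.
Set Implicit Arguments. Unset Strict Implicit. Unset Printing Implicit Defensive.
Import GRing.Theory.
Local Open Scope ring_scope.

Definition semi_planar (G H : finZmodType) (f : G -> H) : Prop :=
  forall (a : G) (y : H), a != 0 ->
    let n := #|[set x : G | f (x + a) - f x == y]| in (n = 0%N \/ n = 2%N).

(* Vertices of the incidence graph of S(G,H;f): points inl (x,y), lines inr (a,b). *)
Definition ivertex (G H : finZmodType) := ((G * H) + (G * H))%type.

Definition incident (G H : finZmodType) (f : G -> H) (p l : G * H) : bool :=
  p.2 == f (p.1 - l.1) + l.2.

Definition inc_adj (G H : finZmodType) (f : G -> H) : rel (ivertex G H) :=
  fun u v => match u, v with
             | inl p, inr l => incident f p l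
             | inr l, inl p => incident f p l
             | _, _ => false
             end.

(* S(G,H;f) splits into two substructures: its incidence graph has exactly
   two connected components. *)
Definition splits_in_two (G H : finZmodType) (f : G -> H) : Prop :=
  n_comp (inc_adj f) (@predT (ivertex G H)) = 2%N.

Definition in_S1 (G H : finZmodType) (f : G -> H) (a : G) (b : H) : bool :=
  connect (inc_adj f) (inr (0, 0)) (inr (a, b)).

Definition P1 (G H : finZmodType) (f : G -> H) (a : G) : {set H} :=
  [set b | in_S1 f a b].
Definition P2 (G H : finZmodType) (f : G -> H) (a : G) : {set H} :=
  [set b | ~~ in_S1 f a b].

(* Main.v *)
Require Import Defs.
From mathcomp Require Import all_boot all_order all_algebra.
Local Open Scope ring_scope.
Set Implicit Arguments. Unset Strict Implicit.
Import GRing.Theory.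

Section Gen.
Variable V : finType.
Variable e : rel V.
Hypothesis esym : symmetric e.

Lemma homo_conn (T : V -> V) : (forall x y, e (T x) (T y) = e x y) ->
  forall x y, connect e x y -> connect e (T x) (T y).
Proof.
move=> hT x y /connectP[p hp ->]; elim: p x hp => [|z p IH] x /=.
  by move=> _; exact: connect0.
case/andP=> hxz hp; apply: connect_trans (IH _ hp).
by apply: connect1; rewrite hT.
Qed.

Lemma three_class (x y z : V) : n_comp e predT = 2%N ->
  ~~ connect e x y -> ~~ connect e x z -> connect e y z.
Proof.
move=> hn nxy nxz; apply/negPn/negP => nyz.
have cs := sym_connect_sym esym.
have r1 : fingraph.root e x != fingraph.root e y by apply/negP => /eqP /(fingraph.rootP cs); apply/negP.
have r2 : fingraph.root e x != fingraph.root e z by apply/negP => /eqP /(fingraph.rootP cs); apply/negP.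
have r3 : fingraph.root e y != fingraph.root e z by apply/negP => /eqP /(fingraph.rootP cs); apply/negP.
have : (3 <= #|predI (roots e) (mem predT)|)%N.
  have -> : (3 = #|[:: fingraph.root e x; fingraph.root e y; fingraph.root e z]|)%N.
    symmetry; apply/card_uniqP; rewrite /= !inE negb_or r1 r2 r3 //.
  apply: subset_leq_card; apply/subsetP => w; rewrite !inE.
  by case/or3P=> /eqP->; rewrite /= /roots fingraph.root_root ?eqxx.
by move: hn; rewrite /n_comp_mem => ->.
Qed.
End Gen.

Section Main.
Variables (G H : finZmodType) (f : G -> H).

Definition tr (g : G) (h : H) (v : ivertex G H) : ivertex G H :=
  match v with
  | inl p => inl (p.1 + g, p.2 + h)
  | inr l => inr (l.1 + g, l.2 + h)
  end.

Lemma tr_adj g h x y : inc_adj f (tr g h x) (tr g h y) = inc_adj f x y.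
Proof.
have K : forall (p l : G * H), incident f (p.1 + g, p.2 + h) (l.1 + g, l.2 + h)
   = incident f p l.
  move=> [x1 x2] [y1 y2]; rewrite /incident /=.
  have -> : x1 + g - (y1 + g) = x1 - y1 by rewrite opprD addrACA subrr addr0.
  by rewrite addrA (inj_eq (addIr h)).
by case: x => [p|l]; case: y => [q|m] //=; rewrite K.
Qed.

Lemma trK g h v : tr (- g) (- h) (tr g h v) = v.
Proof. by case: v => [[x y]|[x y]] /=; rewrite !addrK. Qed.

Lemma adj_sym : symmetric (inc_adj f).
Proof. by case=> [p|l]; case=> [q|m]. Qed.

Lemma tr_conn g h x y : connect (inc_adj f) x y ->
  connect (inc_adj f) (tr g h x) (tr g h y).
Proof. by apply: homo_conn => ??; exact: tr_adj. Qed.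

Local Notation L0 := (inr ((0 : G), (0 : H)) : ivertex G H).
Local Notation C := (connect (inc_adj f)).

Lemma csym x y : C x y = C y x.
Proof. exact: (sym_connect_sym adj_sym). Qed.

Lemma keyK g h : C L0 (tr g h L0) -> forall v, C L0 v = C L0 (tr g h v).
Proof.
move=> h0 v; apply/idP/idP => hv.
  exact: connect_trans h0 (tr_conn g h hv).
have := tr_conn (- g) (- h) hv; rewrite trK => h1.
apply: connect_trans h1.
have := tr_conn (- g) (- h) h0; rewrite trK csym //.
Qed.

Lemma inv_ok g : C L0 (tr g 0 L0) -> C L0 (tr (- g) 0 L0).
Proof.
move=> h0; have := tr_conn (- g) (- 0) h0; rewrite trK oppr0 csym //.
Qed.

Lemma from_u (hs : splits_in_two f) g u : C u (tr g 0 u) ->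
  (C L0 u \/ ~~ C L0 u) -> C L0 (tr g 0 L0).
Proof.
move=> hu [h1|h1].
  rewrite csym; apply: connect_trans (tr_conn g 0 h1) _.
  by rewrite csym; apply: connect_trans h1 hu.
apply/negPn/negP => h2.
have := three_class adj_sym hs h2 h1 => h3.
have := tr_conn (- g) (- 0) h3; rewrite trK oppr0 => h4.
move/negP: h1; apply; apply: connect_trans h4 _.
have := tr_conn (- g) (- 0) hu; rewrite trK oppr0 csym //.
Qed.
End Main.

Theorem lemma5 (G H : finZmodType) (k : nat) (hG : #|G| = k) (hH : #|H| = k)
  (hkeven : ~~ odd k) (hk : (2 < k)%N) (f : G -> H)
  (hf : semi_planar f) (hsplit : splits_in_two f) (a c : G) :
  (P1 f a :&: P1 f c != set0) \/ (P2 f a :&: P2 f c != set0) ->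
  P1 f (a - c) = P1 f 0 /\ P1 f (c - a) = P1 f 0.
Proof.
move=> hyp.
have hu : exists b, connect (inc_adj f) (inr (a, b)) (tr (c - a) 0 (inr (a, b)))
   /\ (connect (inc_adj f) (inr (0, 0)) (inr (a, b)) \/
       ~~ connect (inc_adj f) (inr (0, 0)) (inr (a, b))).
  have E : forall b, tr (c - a) 0 (inr (a, b)) = inr (c, b) :> ivertex G H.
    by move=> b /=; rewrite addrC subrK addr0.
  case: hyp => /set0Pn[b]; rewrite !inE /in_S1 => /andP[h1 h2]; exists b;
    rewrite E.
    split; last by left.
    by apply: connect_trans h2; rewrite (csym f).
  split; last by right.
  by apply: (three_class (adj_sym f) _ h1 h2); exact: hsplit.
case: hu => b [hu1 hu2].
have K1 := from_u hsplit hu1 hu2.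
have K2 := inv_ok K1.
rewrite opprB in K2.
have P : forall g, connect (inc_adj f) (inr (0, 0)) (tr g 0 (inr (0, 0))) ->
   P1 f g = P1 f 0.
  move=> g hg; apply/setP => y; rewrite !inE /in_S1 (keyK hg (inr (0, y))) /=.
  by rewrite add0r addr0.
by split; apply: P.
Qed.
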